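(* Let $\mathbb{S}$ be the Sorgenfrey line and let $\Delta_2=\{(x,y)\in\mathbb{S}^2: x\leq y\}$ with the subspace topology from $\mathbb{S}^2$. Then $\Delta_2$ and $\mathbb{S}^2$ are homeomorphic.
   Context: The Sorgenfrey line $\mathbb{S}$ is the real line with the topology generated by half-open intervals $[a,b[$; $\mathbb{S}^2$ carries the product topology. *)

(* Defs.v *)
From Stdlib Require Import Reals.
Open Scope R_scope.

Definition sorgenfrey_open (U : R -> Prop) : Prop :=
  forall x, U x -> exists a b, a <= x < b /\ (forall t, a <= t < b -> U t).

Definition sorgenfrey2_open (W : R * R -> Prop) : Prop :=
  forall p, W p -> exists U V : R -> Prop,
    sorgenfrey_open U /\ sorgenfrey_open V /\ U (fst p) /\ V (snd p) /\
    (forall q, U (fst q) -> V (snd q) -> W q).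

Definition Delta2 : Type := { p : R * R | fst p <= snd p }.

Definition Delta2_open (O : Delta2 -> Prop) : Prop :=
  exists W, sorgenfrey2_open W /\ forall d : Delta2, O d <-> W (proj1_sig d).

Definition Delta2_homeomorphic_S2 : Prop :=
  exists (f : Delta2 -> R * R) (g : R * R -> Delta2),
    (forall d, g (f d) = d) /\ (forall q, f (g q) = q) /\
    (forall W, sorgenfrey2_open W -> Delta2_open (fun d => W (f d))) /\
    (forall O, Delta2_open O -> sorgenfrey2_open (fun q => O (g q))).

(* Main.v *)
Require Import Defs.
From Stdlib Require Import Reals Lra Lia ZArith ClassicalEpsilon ProofIrrelevance.
Open Scope R_scope.

Definition fl (x : R) : Z := (up x - 1)%Z.

Lemma fl_spec x : IZR (fl x) <= x < IZR (fl x) + 1.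
Proof. unfold fl. rewrite minus_IZR. destruct (archimed x). simpl. lra. Qed.

Lemma fl_unique x z : IZR z <= x < IZR z + 1 -> fl x = z.
Proof.
  intros [H1 H2]. destruct (fl_spec x) as [H3 H4].
  assert (A: (fl x < z + 1)%Z). { apply lt_IZR. rewrite plus_IZR. simpl. lra. }
  assert (B: (z < fl x + 1)%Z). { apply lt_IZR. rewrite plus_IZR. simpl. lra. }
  lia.
Qed.

Lemma fl_ge x z : IZR z <= x -> (z <= fl x)%Z.
Proof.
  intros H. destruct (fl_spec x) as [H3 H4].
  assert (A: (z < fl x + 1)%Z). { apply lt_IZR. rewrite plus_IZR. simpl. lra. }
  lia.
Qed.

Lemma fl_const x : exists eta, eta > 0 /\ forall x', x <= x' < x + eta -> fl x' = fl x.
Proof.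
  destruct (fl_spec x). exists (IZR (fl x) + 1 - x). split. lra.
  intros x' Hx'. apply fl_unique. lra.
Qed.

Lemma div2_facts (d:Z) : (d = 2*(d/2) + d mod 2 /\ 0 <= d mod 2 < 2)%Z.
Proof. split. apply Z.div_mod; lia. apply Z.mod_pos_bound; lia. Qed.

Definition pw (k : nat) : R := 2 ^ k.
Lemma pw_pos k : 0 < pw k.
Proof. unfold pw. apply pow_lt. lra. Qed.
Lemma pw_S k : pw (S k) = 2 * pw k.
Proof. reflexivity. Qed.

Lemma pw_ge k : INR k < pw k.
Proof.
  induction k. simpl. unfold pw. simpl. lra.
  rewrite S_INR, pw_S. assert (1 <= pw k). { clear IHk. induction k. unfold pw; simpl; lra. rewrite pw_S; lra. }
  lra.
Qed.

Lemma ipw_small e : 0 < e -> exists n, / pw n < e.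
Proof.
  intros He. destruct (archimed_cor1 e He) as [N [H1 H2]]. exists N.
  assert (0 < INR N) by (apply lt_0_INR; lia).
  pose proof (pw_ge N).
  apply Rle_lt_trans with (/ INR N); auto.
  apply Rinv_le_contravar; lra.
Qed.

Definition c (k : nat) (u : R) : R := (IZR (fl (u * pw k)) + 2) / pw k.

Lemma c_bounds k u : u + / pw k < c k u <= u + 2 / pw k.
Proof.
  unfold c. pose proof (pw_pos k) as HP. set (P := pw k) in *.
  destruct (fl_spec (u * P)) as [H1 H2]. set (F := IZR (fl (u * P))) in *.
  assert (E1: (F + 2) / P = u + (F + 2 - u * P) / P) by (field; lra).
  assert (E2: / P = 1 / P) by (field; lra).
  rewrite E1, E2. split.
  - apply Rplus_lt_compat_l. unfold Rdiv. apply Rmult_lt_compat_r. apply Rinv_0_lt_compat; lra. lra.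
  - apply Rplus_le_compat_l. unfold Rdiv. apply Rmult_le_compat_r. left; apply Rinv_0_lt_compat; lra. lra.
Qed.

Lemma c0 u : c 0 u = IZR (fl u) + 2.
Proof. unfold c, pw. simpl. rewrite Rmult_1_r. field. Qed.

Lemma c_ints k u :
  (2 * fl (u * pw k) <= fl (u * (2 * pw k)) <= 2 * fl (u * pw k) + 1)%Z.
Proof.
  pose proof (pw_pos k) as HP.
  destruct (fl_spec (u * pw k)) as [H1 H2].
  split.
  - apply fl_ge. rewrite mult_IZR. simpl. nra.
  - destruct (fl_spec (u * (2 * pw k))) as [H3 H4].
    assert (IZR (fl (u * (2 * pw k))) < IZR (2 * fl (u * pw k) + 2)). { rewrite plus_IZR, mult_IZR. simpl. nra. }
    apply lt_IZR in H. lia.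
Qed.

Definition gap k u := c k u - c (S k) u.

Lemma gap_bounds k u : / pw (S k) <= gap k u <= / pw k.
Proof.
  pose proof (c_ints k u) as H.
  unfold gap, c. rewrite pw_S. pose proof (pw_pos k) as HP. set (P := pw k) in *.
  set (a := fl (u * P)) in *. set (b := fl (u * (2 * P))) in *.
  destruct H as [H1 H2]. apply IZR_le in H1. apply IZR_le in H2.
  rewrite mult_IZR in H1. rewrite plus_IZR, mult_IZR in H2. simpl in H1, H2.
  set (A := IZR a) in *. set (B := IZR b) in *.
  replace ((A + 2) / P - (B + 2) / (2 * P)) with ((2 * A + 2 - B) / (2 * P)) by (field; lra).
  split.
  - replace (/ (2 * P)) with (1 / (2 * P)) by (field; lra).
    unfold Rdiv. apply Rmult_le_compat_r. left; apply Rinv_0_lt_compat; lra. lra.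
  - replace (/ P) with (2 / (2 * P)) by (field; lra).
    unfold Rdiv. apply Rmult_le_compat_r. left; apply Rinv_0_lt_compat; lra. lra.
Qed.

Lemma gap_pos k u : 0 < gap k u.
Proof. pose proof (gap_bounds k u). pose proof (pw_pos (S k)). assert (0 < / pw (S k)) by (apply Rinv_0_lt_compat; lra). lra. Qed.

Lemma c_anti u m n : (m <= n)%nat -> c n u <= c m u.
Proof.
  induction 1. lra. pose proof (gap_pos m0 u). unfold gap in H0. lra.
Qed.

Lemma c_const k u : exists eta, eta > 0 /\ forall u', u <= u' < u + eta -> c k u' = c k u.
Proof.
  destruct (fl_const (u * pw k)) as [e [He H]]. pose proof (pw_pos k).
  exists (e / pw k). split. unfold Rdiv. apply Rmult_lt_0_compat; auto. apply Rinv_0_lt_compat; lra.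
  intros u' Hu'. unfold c. rewrite (H (u' * pw k)). reflexivity.
  split. nra. assert (u' < u + e / pw k) by lra.
  apply Rmult_lt_compat_r with (r := pw k) in H1; auto.
  replace ((u + e / pw k) * pw k) with (u * pw k + e) in H1 by (field; lra). lra.
Qed.

Lemma piece_exists u v : u < v < c 0 u -> exists k, c (S k) u <= v < c k u.
Proof.
  intros [H1 H2].
  destruct (ipw_small ((v - u)/2)) as [n Hn]. lra.
  assert (Hc: c n u <= v). { pose proof (c_bounds n u). lra. }
  clear Hn. induction n.
  - lra.
  - destruct (Rle_lt_dec (c n u) v). auto. exists n. lra.
Qed.

Lemma piece_unique u v k j : c (S k) u <= v < c k u -> c (S j) u <= v < c j u -> k = j.
Proof.
  intros Hk Hj. destruct (Nat.lt_trichotomy k j) as [H|[H|H]]; auto.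
  - pose proof (c_anti u (S k) j H). lra.
  - pose proof (c_anti u (S j) k H). lra.
Qed.

Lemma ipw_anti m n : (m <= n)%nat -> / pw n <= / pw m.
Proof.
  intros H. apply Rinv_le_contravar. apply pw_pos. unfold pw. apply Rle_pow; auto. lra.
Qed.

Lemma band_exists y : 0 < y < 1 -> exists k, / pw (S k) <= y < / pw k.
Proof.
  intros [H1 H2]. destruct (ipw_small y H1) as [n Hn]. assert (Hc: / pw n <= y) by lra.
  clear Hn. induction n.
  - unfold pw in Hc. simpl in Hc. rewrite Rinv_1 in Hc. lra.
  - destruct (Rle_lt_dec (/ pw n) y). auto. exists n. lra.
Qed.

Lemma band_unique y k j : / pw (S k) <= y < / pw k -> / pw (S j) <= y < / pw j -> k = j.
Proof.
  intros Hk Hj. destruct (Nat.lt_trichotomy k j) as [H|[H|H]]; auto.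
  - pose proof (ipw_anti (S k) j H). lra.
  - pose proof (ipw_anti (S j) k H). lra.
Qed.
Definition kN u v := epsilon (inhabits 0%nat) (fun k => c (S k) u <= v < c k u).
Definition kB y := epsilon (inhabits 0%nat) (fun k => / pw (S k) <= y < / pw k).
Definition yN k u v := (1 + (v - c (S k) u) / gap k u) / pw (S k).
Definition vB k x y := c (S k) x + (pw (S k) * y - 1) * gap k x.

Lemma kN_spec u v : u < v < c 0 u -> c (S (kN u v)) u <= v < c (kN u v) u.
Proof. intros H. unfold kN. apply epsilon_spec. apply piece_exists; auto. Qed.

Lemma kN_eq u v k : c (S k) u <= v < c k u -> kN u v = k.
Proof.
  intros H. assert (u < v < c 0 u).
  { pose proof (c_bounds (S k) u). pose proof (c_anti u 0 k ltac:(lia)).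
    pose proof (pw_pos (S k)). assert (0 < / pw (S k)) by (apply Rinv_0_lt_compat; lra). lra. }
  eapply piece_unique. apply kN_spec; auto. auto.
Qed.

Lemma kB_spec y : 0 < y < 1 -> / pw (S (kB y)) <= y < / pw (kB y).
Proof. intros H. unfold kB. apply epsilon_spec. apply band_exists; auto. Qed.

Lemma ipw_S k : / pw (S k) = / pw k / 2.
Proof. rewrite pw_S. pose proof (pw_pos k). field. lra. Qed.

Lemma kB_eq y k : / pw (S k) <= y < / pw k -> kB y = k.
Proof.
  intros H. assert (0 < y < 1).
  { pose proof (ipw_anti 0 k ltac:(lia)). unfold pw at 2 in H0. simpl in H0. rewrite Rinv_1 in H0.
    pose proof (pw_pos (S k)). assert (0 < / pw (S k)) by (apply Rinv_0_lt_compat; lra). lra. }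
  eapply band_unique. apply kB_spec; auto. auto.
Qed.

Lemma yN_range k u v : c (S k) u <= v < c k u -> / pw (S k) <= yN k u v < / pw k.
Proof.
  intros [H1 H2]. pose proof (gap_pos k u) as Hg. unfold yN.
  assert (Ht: 0 <= (v - c (S k) u) / gap k u < 1).
  { unfold gap in *. split. unfold Rdiv. apply Rmult_le_pos. lra. left; apply Rinv_0_lt_compat; lra.
    apply Rmult_lt_reg_r with (c k u - c (S k) u). lra.
    unfold Rdiv. rewrite Rmult_assoc, Rinv_l, Rmult_1_r. lra. lra. }
  pose proof (pw_pos k). rewrite pw_S.
  set (t := (v - c (S k) u) / gap k u) in *.
  split.
  - unfold Rdiv. rewrite <- (Rmult_1_l (/ (2 * pw k))) at 1. apply Rmult_le_compat_r. left; apply Rinv_0_lt_compat; lra. lra.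
  - replace (/ pw k) with (2 / (2 * pw k)) by (field; lra).
    unfold Rdiv. apply Rmult_lt_compat_r. apply Rinv_0_lt_compat; lra. lra.
Qed.

Lemma vB_yN k u v : vB k u (yN k u v) = v.
Proof.
  unfold vB, yN. pose proof (gap_pos k u). pose proof (pw_pos (S k)). field. lra.
Qed.

Lemma vB_range k x y : / pw (S k) <= y < / pw k -> c (S k) x <= vB k x y < c k x.
Proof.
  intros [H1 H2]. pose proof (gap_pos k x) as Hg. unfold vB. pose proof (pw_pos k).
  rewrite ipw_S in H1. rewrite pw_S.
  assert (0 <= 2 * pw k * y - 1 < 1).
  { split. apply Rmult_le_compat_l with (r := 2 * pw k) in H1. 2: lra.
    replace (2 * pw k * (/ pw k / 2)) with 1 in H1 by (field; lra). lra.
    apply Rmult_lt_compat_l with (r := 2 * pw k) in H2. 2: lra.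
    replace (2 * pw k * / pw k) with 2 in H2 by (field; lra). lra. }
  unfold gap in *. split; nra.
Qed.

Lemma yN_vB k x y : yN k x (vB k x y) = y.
Proof.
  unfold vB, yN. pose proof (gap_pos k x). pose proof (pw_pos (S k)). field. lra.
Qed.

Definition Phi (p : R * R) : R * R :=
  if Rle_dec (snd p) (fst p) then (fst p, 0)
  else if Rlt_dec (snd p) (IZR (fl (fst p)) + 2) then (fst p, yN (kN (fst p) (snd p)) (fst p) (snd p))
  else if Z.even (fl (snd p) - fl (fst p)) then
    (snd p, fst p - IZR (fl (fst p)) - IZR ((fl (snd p) - fl (fst p)) / 2))
  else (fst p, snd p - IZR (fl (snd p)) + IZR ((fl (snd p) - fl (fst p)) / 2)).

Definition Gam (q : R * R) : R * R :=
  if Rlt_dec (snd q) 0 then (snd q + IZR (fl (snd q)) + IZR (fl (fst q)), fst q)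
  else if Rle_dec (snd q) 0 then (fst q, fst q)
  else if Rlt_dec (snd q) 1 then (fst q, vB (kB (snd q)) (fst q) (snd q))
  else (fst q, snd q + IZR (fl (snd q)) + IZR (fl (fst q)) + 1).
Lemma fl_shift y n : fl (y + IZR n) = (fl y + n)%Z.
Proof. apply fl_unique. rewrite plus_IZR. destruct (fl_spec y). lra. Qed.

Lemma even_2 n : Z.even (2 * n) = true.
Proof. rewrite Z.even_mul. reflexivity. Qed.
Lemma odd_2 n : Z.even (2 * n + 1) = false.
Proof. rewrite Z.even_add, even_2. reflexivity. Qed.

Lemma Gam_in q : fst (Gam q) <= snd (Gam q).
Proof.
  destruct q as [x y]. unfold Gam; simpl.
  destruct (Rlt_dec y 0).
  - simpl. destruct (fl_spec x), (fl_spec y).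
    assert (IZR (fl y) <= -1). { assert (fl y < 0)%Z. apply lt_IZR. simpl. lra. apply IZR_le. lia. }
    lra.
  - destruct (Rle_dec y 0). simpl; lra.
    destruct (Rlt_dec y 1); simpl.
    + assert (0 < y < 1) by lra. pose proof (vB_range (kB y) x y (kB_spec y H)).
      pose proof (c_bounds (S (kB y)) x). pose proof (pw_pos (S (kB y))).
      assert (0 < / pw (S (kB y))) by (apply Rinv_0_lt_compat; lra). lra.
    + destruct (fl_spec x), (fl_spec y).
      assert (0 <= IZR (fl y)). { apply IZR_le. assert (0 < fl y + 1)%Z. apply lt_IZR. rewrite plus_IZR. simpl. lra. lia. }
      lra.
Qed.

Lemma Phi_Gam q : Phi (Gam q) = q.
Proof.
  destruct q as [x y]. unfold Gam; simpl.
  destruct (fl_spec x) as [Hx1 Hx2]. destruct (fl_spec y) as [Hy1 Hy2].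
  destruct (Rlt_dec y 0).
  - assert (Hfy: (fl y <= -1)%Z). { assert (fl y < 0)%Z. apply lt_IZR. simpl. lra. lia. }
    set (u := y + IZR (fl y) + IZR (fl x)).
    assert (Hfu : fl u = (2 * fl y + fl x)%Z).
    { apply fl_unique. unfold u. rewrite plus_IZR, mult_IZR. simpl. lra. }
    assert (IZR (fl y) <= -1) by (apply IZR_le in Hfy; exact Hfy).
    unfold Phi; simpl. rewrite Hfu.
    destruct (Rle_dec x u). { exfalso. unfold u in *. lra. }
    destruct (Rlt_dec x (IZR (2 * fl y + fl x) + 2)) as [Hr|Hr].
    { exfalso. rewrite plus_IZR, mult_IZR in Hr. simpl in Hr. lra. }
    replace (fl x - (2 * fl y + fl x))%Z with (2 * (- fl y))%Z by lia.
    rewrite even_2. f_equal. replace ((2 * - fl y) / 2)%Z with (- fl y)%Z.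
    unfold u. rewrite plus_IZR, mult_IZR, opp_IZR. simpl. ring.
    pose proof (div2_facts (2 * - fl y)). lia.
  - destruct (Rle_dec y 0).
    + assert (y = 0) by lra. subst y. unfold Phi; simpl.
      destruct (Rle_dec x x). reflexivity. lra.
    + destruct (Rlt_dec y 1).
      * assert (Hy: 0 < y < 1) by lra. pose proof (kB_spec y Hy) as Hk.
        set (k := kB y) in *. pose proof (vB_range k x y Hk) as Hv.
        unfold Phi; simpl.
        pose proof (c_bounds (S k) x). pose proof (pw_pos (S k)).
        assert (0 < / pw (S k)) by (apply Rinv_0_lt_compat; lra).
        pose proof (c_anti x 0 k ltac:(lia)). rewrite c0 in H2.
        destruct (Rle_dec (vB k x y) x). lra.
        destruct (Rlt_dec (vB k x y) (IZR (fl x) + 2)). 2: lra.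
        rewrite (kN_eq x (vB k x y) k Hv). rewrite yN_vB. reflexivity.
      * assert (Hfy: (1 <= fl y)%Z). { apply fl_ge. simpl. lra. }
        set (v := y + IZR (fl y) + IZR (fl x) + 1).
        assert (Hfv : fl v = (2 * fl y + fl x + 1)%Z).
        { apply fl_unique. unfold v. rewrite !plus_IZR, mult_IZR. simpl. lra. }
        assert (1 <= IZR (fl y)) by (apply IZR_le in Hfy; exact Hfy).
        unfold Phi; simpl. rewrite Hfv.
        destruct (Rle_dec v x). { exfalso. unfold v in *. lra. }
        destruct (Rlt_dec v (IZR (fl x) + 2)). { exfalso. unfold v in *. lra. }
        replace (2 * fl y + fl x + 1 - fl x)%Z with (2 * fl y + 1)%Z by lia.
        rewrite odd_2. f_equal. replace ((2 * fl y + 1) / 2)%Z with (fl y).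
        unfold v. rewrite !plus_IZR, mult_IZR. simpl. ring.
        pose proof (div2_facts (2 * fl y + 1)). lia.
Qed.

Lemma Gam_Phi p : fst p <= snd p -> Gam (Phi p) = p.
Proof.
  destruct p as [u v]. simpl. intros Huv. unfold Phi; simpl.
  destruct (fl_spec u) as [Hu1 Hu2]. destruct (fl_spec v) as [Hv1 Hv2].
  destruct (Rle_dec v u).
  - assert (v = u) by lra. subst. unfold Gam; simpl.
    destruct (Rlt_dec 0 0). lra. destruct (Rle_dec 0 0). reflexivity. lra.
  - destruct (Rlt_dec v (IZR (fl u) + 2)).
    + rewrite <- c0 in r. assert (H: u < v < c 0 u) by lra.
      pose proof (kN_spec u v H) as Hk. set (k := kN u v) in *.
      pose proof (yN_range k u v Hk) as Hy.
      pose proof (pw_pos (S k)). assert (0 < / pw (S k)) by (apply Rinv_0_lt_compat; lra).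
      pose proof (ipw_anti 0 k ltac:(lia)). unfold pw at 2 in H2. simpl in H2. rewrite Rinv_1 in H2.
      unfold Gam; simpl.
      destruct (Rlt_dec (yN k u v) 0). lra. destruct (Rle_dec (yN k u v) 0). lra.
      destruct (Rlt_dec (yN k u v) 1). 2: lra.
      rewrite (kB_eq _ k Hy). rewrite vB_yN. reflexivity.
    + assert (Hd : (2 <= fl v - fl u)%Z).
      { assert (fl u + 2 <= fl v)%Z. apply fl_ge. rewrite plus_IZR. simpl. lra. lia. }
      pose proof (div2_facts (fl v - fl u)) as Hdf.
      pose proof (Zmod_even (fl v - fl u)) as Hm.
      destruct (Z.even (fl v - fl u)).
      * set (t := ((fl v - fl u) / 2)%Z) in *.
        set (z := u - IZR (fl u) - IZR t).
        assert (Hfz : fl z = (- t)%Z).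
        { apply fl_unique. unfold z. rewrite opp_IZR. lra. }
        assert (Ht : (1 <= t)%Z) by lia. apply IZR_le in Ht.
        unfold Gam; simpl. destruct (Rlt_dec z 0). 2: (exfalso; unfold z in *; lra).
        rewrite Hfz. f_equal. unfold z. rewrite opp_IZR.
        assert (IZR (fl v) = IZR (fl u) + 2 * IZR t). { rewrite <- mult_IZR, <- plus_IZR. f_equal. lia. }
        lra.
      * set (t := ((fl v - fl u) / 2)%Z) in *.
        set (y := v - IZR (fl v) + IZR t).
        assert (Hfy : fl y = t).
        { apply fl_unique. unfold y. lra. }
        assert (Ht : (1 <= t)%Z) by lia. apply IZR_le in Ht.
        unfold Gam; simpl. destruct (Rlt_dec y 0). (exfalso; unfold y in *; lra).
        destruct (Rle_dec y 0). (exfalso; unfold y in *; lra).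
        destruct (Rlt_dec y 1). (exfalso; unfold y in *; lra).
        rewrite Hfy. f_equal. unfold y.
        assert (IZR (fl v) = IZR (fl u) + 2 * IZR t + 1). { rewrite <- mult_IZR, <- !plus_IZR. f_equal. lia. }
        lra.
Qed.
Definition scont (F : R * R -> R * R) := forall p eps, eps > 0 -> exists eta, eta > 0 /\
  forall q, fst p <= fst q < fst p + eta -> snd p <= snd q < snd p + eta ->
    (fst (F p) <= fst (F q) < fst (F p) + eps /\ snd (F p) <= snd (F q) < snd (F p) + eps).

Lemma min2 a b : a > 0 -> b > 0 -> exists e, e > 0 /\ e <= a /\ e <= b.
Proof. intros. exists (Rmin a b). split. apply Rmin_pos; lra. split. apply Rmin_l. apply Rmin_r. Qed.

Lemma yN_lip k u v v' : v <= v' -> yN k u v <= yN k u v' <= yN k u v + (v' - v).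
Proof.
  intros H. pose proof (gap_bounds k u) as [G1 G2]. pose proof (pw_pos (S k)) as HP.
  pose proof (gap_pos k u) as Hg.
  assert (HGP : 1 <= gap k u * pw (S k)).
  { apply Rmult_le_compat_r with (r := pw (S k)) in G1. 2: lra. rewrite Rinv_l in G1; lra. }
  assert (E : yN k u v' = yN k u v + (v' - v) / (gap k u * pw (S k))).
  { unfold yN. field. lra. }
  rewrite E. assert (0 <= (v' - v) / (gap k u * pw (S k))).
  { unfold Rdiv. apply Rmult_le_pos. lra. left. apply Rinv_0_lt_compat. lra. }
  assert ((v' - v) / (gap k u * pw (S k)) <= v' - v).
  { apply Rmult_le_reg_r with (gap k u * pw (S k)). lra.
    unfold Rdiv. rewrite Rmult_assoc, Rinv_l. nra. lra. }
  lra.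
Qed.

Lemma vB_lip k x y y' : y <= y' -> vB k x y <= vB k x y' <= vB k x y + 2 * (y' - y).
Proof.
  intros H. pose proof (gap_bounds k x) as [G1 G2]. pose proof (pw_pos k) as HP.
  pose proof (gap_pos k x) as Hg.
  assert (HGP : pw (S k) * gap k x <= 2).
  { rewrite pw_S. apply Rmult_le_compat_l with (r := pw k) in G2. 2: lra. rewrite Rinv_r in G2; [rewrite Rmult_assoc; lra | lra]. }
  assert (E : vB k x y' = vB k x y + (y' - y) * (pw (S k) * gap k x)).
  { unfold vB. ring. }
  rewrite E. pose proof (pw_pos (S k)).
  assert (0 <= pw (S k) * gap k x) by (apply Rmult_le_pos; lra).
  assert (0 <= (y' - y) * (pw (S k) * gap k x)) by (apply Rmult_le_pos; lra).
  assert ((y' - y) * (pw (S k) * gap k x) <= (y' - y) * 2) by (apply Rmult_le_compat_l; lra).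
  lra.
Qed.

Lemma Phi_cont : scont Phi.
Proof.
  intros [u v] eps Heps. unfold Phi; simpl.
  destruct (Rle_dec v u) as [Hvu|Hvu].
  - destruct (Rlt_or_le v u) as [Hlt|Hge].
    + destruct (min2 (u - v) eps) as [eta [He [He1 He2]]]; try lra.
      exists eta. split; auto. intros [q1 q2] Hq1 Hq2; simpl in *.
      unfold Phi; simpl. destruct (Rle_dec q2 q1). simpl. lra. lra.
    + assert (v = u) by lra. subst v.
      destruct (min2 1 (eps / 2)) as [eta [He [He1 He2]]]; try lra.
      exists eta. split; auto. intros [q1 q2] Hq1 Hq2; simpl in *.
      unfold Phi; simpl. destruct (Rle_dec q2 q1). simpl. lra.
      destruct (fl_spec q1).
      destruct (Rlt_dec q2 (IZR (fl q1) + 2)). 2: lra. simpl.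
      assert (Hq: q1 < q2 < c 0 q1) by (rewrite c0; lra).
      pose proof (kN_spec _ _ Hq) as Hk. set (k := kN q1 q2) in *.
      pose proof (yN_range _ _ _ Hk). pose proof (c_bounds (S k) q1).
      rewrite ipw_S in *. pose proof (pw_pos k). assert (0 < / pw k) by (apply Rinv_0_lt_compat; lra).
      split. lra. lra.
  - destruct (Rlt_dec v (IZR (fl u) + 2)) as [HN|HN].
    + assert (H: u < v < c 0 u) by (rewrite c0; lra).
      pose proof (kN_spec _ _ H) as Hk. set (k := kN u v) in *.
      destruct (c_const k u) as [e1 [He1 C1]]. destruct (c_const (S k) u) as [e2 [He2 C2]].
      destruct (min2 e1 e2) as [e3 [He3 [H31 H32]]]; auto.
      destruct (min2 (v - u) (c k u - v)) as [e4 [He4 [H41 H42]]]; try lra.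
      destruct (min2 e3 e4) as [e5 [He5 [H51 H52]]]; auto.
      destruct (min2 e5 eps) as [eta [He [Hea Heb]]]; auto.
      exists eta. split; auto. intros [q1 q2] Hq1 Hq2; simpl in *.
      assert (Ck: c k q1 = c k u) by (apply C1; lra).
      assert (CSk: c (S k) q1 = c (S k) u) by (apply C2; lra).
      unfold Phi; simpl. destruct (Rle_dec q2 q1). lra.
      pose proof (c_anti q1 0 k ltac:(lia)). rewrite c0 in H0.
      destruct (Rlt_dec q2 (IZR (fl q1) + 2)). 2: lra. simpl.
      assert (Hk' : c (S k) q1 <= q2 < c k q1) by lra.
      rewrite (kN_eq _ _ _ Hk').
      assert (E: yN k q1 q2 = yN k u q2). { unfold yN, gap. rewrite Ck, CSk. reflexivity. }
      rewrite E. pose proof (yN_lip k u v q2 ltac:(lra)). lra.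
    + destruct (fl_const u) as [e1 [He1 F1]]. destruct (fl_const v) as [e2 [He2 F2]].
      destruct (min2 e1 e2) as [e3 [He3 [H31 H32]]]; auto.
      destruct (min2 e3 eps) as [eta [He [Hea Heb]]]; auto.
      exists eta. split; auto. intros [q1 q2] Hq1 Hq2; simpl in *.
      assert (G1: fl q1 = fl u) by (apply F1; lra). assert (G2: fl q2 = fl v) by (apply F2; lra).
      destruct (fl_spec q1). rewrite G1 in *. rewrite G2.
      destruct (Rle_dec q2 q1). lra. destruct (Rlt_dec q2 (IZR (fl u) + 2)). lra.
      destruct (Z.even (fl v - fl u)); simpl; lra.
Qed.

Lemma Gam_cont : scont Gam.
Proof.
  intros [x y] eps Heps. unfold Gam; simpl.
  destruct (Rlt_dec y 0) as [Hy|Hy].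
  - destruct (fl_const x) as [e1 [He1 F1]]. destruct (fl_const y) as [e2 [He2 F2]].
    destruct (min2 e1 e2) as [e3 [He3 [H31 H32]]]; auto.
    destruct (min2 e3 eps) as [eta [He [Hea Heb]]]; auto.
    exists eta. split; auto. intros [q1 q2] Hq1 Hq2; simpl in *.
    destruct (fl_spec y).
    assert (Hfy: (fl y <= -1)%Z). { assert (fl y < 0)%Z. apply lt_IZR. simpl. lra. lia. }
    apply IZR_le in Hfy.
    assert (G1: fl q1 = fl x) by (apply F1; lra). assert (G2: fl q2 = fl y) by (apply F2; lra).
    destruct (fl_spec q2). rewrite G2 in *.
    unfold Gam; simpl. destruct (Rlt_dec q2 0). 2: lra. simpl. rewrite ?G1, ?G2. lra.
  - destruct (Rle_dec y 0) as [Hy0|Hy0].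
    + assert (y = 0) by lra. subst y.
      destruct (min2 1 (eps / 5)) as [eta [He [He1 He2]]]; try lra.
      exists eta. split; auto. intros [q1 q2] Hq1 Hq2; simpl in *.
      unfold Gam; simpl. destruct (Rlt_dec q2 0). lra.
      destruct (Rle_dec q2 0). simpl. lra.
      destruct (Rlt_dec q2 1). 2: lra. simpl.
      assert (Hy': 0 < q2 < 1) by lra. pose proof (kB_spec _ Hy') as Hk. set (k := kB q2) in *.
      pose proof (vB_range k q1 q2 Hk). pose proof (c_bounds (S k) q1). pose proof (c_bounds k q1).
      rewrite ipw_S in *. pose proof (pw_pos k). assert (0 < / pw k) by (apply Rinv_0_lt_compat; lra).
      lra.
    + destruct (Rlt_dec y 1) as [Hy1|Hy1].
      * assert (Hy': 0 < y < 1) by lra. pose proof (kB_spec _ Hy') as Hk. set (k := kB y) in *.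
        destruct (c_const k x) as [e1 [He1 C1]]. destruct (c_const (S k) x) as [e2 [He2 C2]].
        destruct (min2 e1 e2) as [e3 [He3 [H31 H32]]]; auto.
        destruct (min2 (/ pw k - y) (eps / 2)) as [e4 [He4 [H41 H42]]]; try lra.
        destruct (min2 e3 e4) as [eta [He [Hea Heb]]]; auto.
        exists eta. split; auto. intros [q1 q2] Hq1 Hq2; simpl in *.
        assert (Ck: c k q1 = c k x) by (apply C1; lra).
        assert (CSk: c (S k) q1 = c (S k) x) by (apply C2; lra).
        pose proof (ipw_anti 0 k ltac:(lia)). unfold pw at 2 in H. simpl in H. rewrite Rinv_1 in H.
        unfold Gam; simpl. destruct (Rlt_dec q2 0). lra. destruct (Rle_dec q2 0). lra.
        destruct (Rlt_dec q2 1). 2: lra. simpl.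
        rewrite (kB_eq q2 k) by lra.
        assert (E: vB k q1 q2 = vB k x q2). { unfold vB, gap. rewrite Ck, CSk. reflexivity. }
        rewrite E. pose proof (vB_lip k x y q2 ltac:(lra)). lra.
      * destruct (fl_const x) as [e1 [He1 F1]]. destruct (fl_const y) as [e2 [He2 F2]].
        destruct (min2 e1 e2) as [e3 [He3 [H31 H32]]]; auto.
        destruct (min2 e3 eps) as [eta [He [Hea Heb]]]; auto.
        exists eta. split; auto. intros [q1 q2] Hq1 Hq2; simpl in *.
        assert (G1: fl q1 = fl x) by (apply F1; lra). assert (G2: fl q2 = fl y) by (apply F2; lra).
        unfold Gam; simpl. destruct (Rlt_dec q2 0). lra. destruct (Rle_dec q2 0). lra.
        destruct (Rlt_dec q2 1). lra. simpl. rewrite ?G1, ?G2. lra.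
Qed.
Lemma interval_open a b : sorgenfrey_open (fun t => a <= t < b).
Proof. intros x Hx. exists a, b. split; auto. Qed.

Lemma preimage_open F (HF : scont F) W :
  sorgenfrey2_open W -> sorgenfrey2_open (fun p => W (F p)).
Proof.
  intros HW p Hp. destruct (HW (F p) Hp) as (U & V & HU & HV & HU1 & HV2 & HUV).
  destruct (HU _ HU1) as (a & b & [Ha Hb] & Hab).
  destruct (HV _ HV2) as (c' & d & [Hc Hd] & Hcd).
  destruct (min2 (b - fst (F p)) (d - snd (F p))) as [e [He [He1 He2]]]; try lra.
  destruct (HF p e He) as (eta & Heta & H).
  exists (fun t => fst p <= t < fst p + eta), (fun t => snd p <= t < snd p + eta).
  split. apply interval_open. split. apply interval_open.
  split. lra. split. lra.
  intros q Hq1 Hq2. destruct (H q Hq1 Hq2) as [[A1 A2] [B1 B2]].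
  apply HUV. apply Hab; lra. apply Hcd; lra.
Qed.

Lemma open_ext W W' : (forall p, W p <-> W' p) -> sorgenfrey2_open W -> sorgenfrey2_open W'.
Proof.
  intros E HW p Hp. apply E in Hp. destruct (HW p Hp) as (U & V & A & B & C & D & G).
  exists U, V. repeat split; auto. intros q H1 H2. apply E. auto.
Qed.

Lemma sig_ext (a b : Delta2) : proj1_sig a = proj1_sig b -> a = b.
Proof.
  destruct a as [x Hx], b as [y Hy]. simpl. intros E. subst. f_equal. apply proof_irrelevance.
Qed.

Theorem theorem4p3 : Delta2_homeomorphic_S2.
Proof.
  exists (fun d => Phi (proj1_sig d)), (fun q => exist _ (Gam q) (Gam_in q)).
  split. { intros d. apply sig_ext. simpl. apply Gam_Phi. exact (proj2_sig d). }
  split. { intros q. apply Phi_Gam. }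
  split.
  - intros W HW. exists (fun p => W (Phi p)). split.
    + apply preimage_open; auto. apply Phi_cont.
    + intros d. tauto.
  - intros O [W0 [HW0 HO]].
    apply open_ext with (fun q => W0 (Gam q)).
    + intros q. rewrite (HO (exist _ (Gam q) (Gam_in q))). simpl. tauto.
    + apply preimage_open; auto. apply Gam_cont.
Qed.
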